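(* Under the standing assumptions below, for every $t>0$ one has $\mathbb P\big(\{\zeta_t=1\}\,\Delta\,\{\tau\le t\}\big)=0$. Consequently $\tau$ is a stopping time with respect to $\mathbb F^{\zeta,c}$, and hence also with respect to $\mathbb F^{\zeta,c}_+$.
   Context: $(\Omega,\mathcal F,\mathbb P)$ is a complete probability space with null sets $\mathcal N_P$. $\gamma=(\gamma_t,t\ge0)$ is a standard gamma process (driftless subordinator, $\gamma_0=0$, càdlàg, $\mathbb E[e^{-\lambda\gamma_t}]=(1+\lambda)^{-t}$). $\tau:\Omega\to(0,+\infty)$ is a strictly positive random variable, independent of $\gamma$, with distribution function $F(t)=\mathbb P(\tau\le t)$ and law $\mathbb P_\tau$. The gamma bridge with random length $\tau$ is $\zeta_t:=\gamma_{t\wedge\tau}/\gamma_\tau$, $t\ge0$. $\Delta$ is symmetric difference. For a process $Y$: $\mathcal F^Y_t=\sigma(Y_s,s\le t)$, $\mathcal F^{Y,c}_t=\mathcal F^Y_t\vee\mathcal N_P$, and $\mathbb F^{Y,c}_+=(\bigcap_{s>t}\mathcal F^{Y,c}_s)_{t\ge0}$. *)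

(* Defs.v *)
From HB Require Import structures.
From mathcomp Require Import all_boot all_order all_algebra.
From mathcomp Require Import all_classical all_reals all_analysis.
Set Implicit Arguments. Unset Strict Implicit. Unset Printing Implicit Defensive.
Import Order.TTheory GRing.Theory Num.Theory.
Import numFieldNormedType.Exports.
Local Open Scope classical_set_scope.
Local Open Scope ring_scope.

Section defs.
Context {d : measure_display} {Omega : measurableType d} {R : realType}.
Variable P : probability Omega R.

Definition complete_prob : Prop :=
  forall N : set Omega, P.-negligible N -> measurable N.

Definition null_sets : set (set Omega) := [set N | P.-negligible N].

Definition mutually_independent (n : nat) (X : nat -> Omega -> R) : Prop :=
  forall B : nat -> set R, (forall i, measurable (B i)) ->
    P (\bigcap_(i in `I_n) (X i @^-1` B i)) =
    \big[*%E/1%E]_(i < n) P (X i @^-1` B i).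

(* Independence of the random variable T from the whole process Y = (Y_t)_{t>=0}
   (checked on the pi-system of finite-dimensional cylinder events). *)
Definition independent_rv_process (T : Omega -> R) (Y : R -> Omega -> R) : Prop :=
  forall (n : nat) (t : nat -> R) (B : set R) (C : nat -> set R),
    measurable B -> (forall i, measurable (C i)) -> (forall i, 0 <= t i) ->
    P (T @^-1` B `&` \bigcap_(i in `I_n) (Y (t i) @^-1` C i)) =
    (P (T @^-1` B) * P (\bigcap_(i in `I_n) (Y (t i) @^-1` C i)))%E.

(* Standard gamma process: a subordinator (gamma_0 = 0, cadlag nondecreasing
   paths, independent increments) whose increments have Laplace transform
   E[exp(-lam (gamma_t - gamma_s))] = (1+lam)^{-(t-s)}; stationarity of the
   increments and driftlessness follow from this Laplace transform. *)
Definition standard_gamma_process (g : R -> Omega -> R) : Prop :=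
  (forall t, 0 <= t -> measurable_fun setT (g t)) /\
      (forall w, g 0 w = 0) /\
      (forall w s t, 0 <= s -> s <= t -> g s w <= g t w) /\
      (forall w t, 0 <= t -> (g x w @[x --> t^'+] --> g t w)) /\
      (forall w t, 0 < t -> cvg (g x w @[x --> t^'-])) /\
      (forall (n : nat) (t : nat -> R), 0 <= t 0%N ->
         (forall i, t i <= t i.+1) ->
         mutually_independent n (fun i w => g (t i.+1) w - g (t i) w)) /\
      (forall s t lam, 0 <= s -> s <= t -> 0 <= lam ->
         (\int[P]_w (expR (- lam * (g t w - g s w)))%:E =
          ((1 + lam) `^ (- (t - s)))%:E)%E).

Definition gamma_bridge (g : R -> Omega -> R) (tau : Omega -> R) : R -> Omega -> R :=
  fun t w => g (Order.min t (tau w)) w / g (tau w) w.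

Definition completed_nat_filtration (Y : R -> Omega -> R) (t : R) : set (set Omega) :=
  <<s [set A | (exists s B, [/\ 0 <= s, s <= t, measurable B & A = Y s @^-1` B])
               \/ null_sets A] >>.

Definition completed_nat_filtration_plus (Y : R -> Omega -> R) (t : R) : set (set Omega) :=
  [set A | forall s, t < s -> completed_nat_filtration Y s A].

Definition stopping_time (F : R -> set (set Omega)) (T : Omega -> R) : Prop :=
  forall t, 0 <= t -> F t [set w | T w <= t].

End defs.

(* Main.v *)
Require Import Defs.
From HB Require Import structures.
From mathcomp Require Import all_boot all_order all_algebra.
From mathcomp Require Import all_classical all_reals all_analysis.
From mathcomp Require Import measurable_realfun.
Import Order.TTheory GRing.Theory Num.Theory.
Local Open Scope classical_set_scope.
Local Open Scope ring_scope.

Lemma neg_eq (d : measure_display) (Omega : measurableType d)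
  (R : realType) (P : probability Omega R) (g : R -> Omega -> R) (a b : R) :
  standard_gamma_process P g -> 0 <= a -> a < b ->
  P.-negligible [set w | g b w = g a w].
Proof.
move=> [mg [_ [_ [_ [_ [_ hL]]]]]] a0 ab.
have mga := mg a a0; have mgb := mg b (le_trans a0 (ltW ab)).
set A := [set w | g b w = g a w].
have mA : measurable A.
  have := measurable_funB mgb mga measurableT (measurable_set1 (0:R)).
  rewrite setTI; congr measurable; apply/seteqP; split => w /=.
    by move/eqP; rewrite subr_eq0 => /eqP.
  by move=> ->; rewrite subrr.
apply/negligibleP => //.
have bound : forall lam, 0 <= lam -> (P A <= ((1 + lam) `^ (- (b - a)))%:E)%E.
  move=> lam lam0; rewrite -(hL a b lam a0 (ltW ab) lam0).
  have -> : P A = P (A `&` setT) by rewrite setIT.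
  rewrite -integral_indic //.
  apply: (ge0_le_integral P measurableT).
  - by move=> w _; rewrite lee_fin.
  - by apply/measurable_EFinP; exact: measurable_indic.
  - apply/measurable_EFinP; apply: measurableT_comp; first exact: measurable_expR.
    apply: measurable_funM; first exact: measurable_cst.
    exact: measurable_funB.
  - move=> w _; rewrite lee_fin /indic; case: (boolP (w \in A)).
      by rewrite inE => ->; rewrite subrr mulr0 expR0.
    by move=> _; rewrite expR_ge0.
apply/eqP; rewrite eq_le measure_ge0 andbT.
apply/lee_addgt0Pr => e e0; rewrite add0e.
have [e1|e1] := leP 1 e.
  by apply: le_trans (probability_le1 P mA) _; rewrite lee_fin.
have c0 : 0 < b - a by rewrite subr_gt0.
set K := ln e / (- (b - a)).
have K0 : 0 <= K.
  rewrite /K ler_ndivlMr ?oppr_lt0 // mul0r; apply: ltW; apply: ln_lt0.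
  by rewrite e0 e1.
have := bound (expR K - 1); rewrite subr_ge0 addrC subrK.
have -> : (expR K) `^ (- (b - a)) = e.
  rewrite -expRM /K divfK ?oppr_eq0 ?gt_eqF //.
  by apply: lnK; rewrite posrE.
apply; apply: le_trans (expR_ge1Dx K); by rewrite lerDl.
Qed.

Theorem mainTheorem4 (d : measure_display) (Omega : measurableType d)
  (R : realType) (P : probability Omega R)
  (g : R -> Omega -> R) (tau : Omega -> R) :
  complete_prob P ->
  standard_gamma_process P g ->
  measurable_fun setT tau ->
  (forall w, 0 < tau w) ->
  independent_rv_process P tau g ->
  (forall t, 0 < t ->
     P.-negligible ((gamma_bridge g tau t @^-1` [set 1]) `+` [set w | tau w <= t]))
  /\ stopping_time (completed_nat_filtration P (gamma_bridge g tau)) tau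
  /\ stopping_time (completed_nat_filtration_plus P (gamma_bridge g tau)) tau.
Proof.
move=> _ hg mtau tau0 _.
have [_ [g00 [gmon _]]] := hg.
have hneg : forall t, 0 < t ->
    P.-negligible ((gamma_bridge g tau t @^-1` [set 1]) `+` [set w | tau w <= t]).
  move=> t t0.
  apply: (@negligibleS _ _ _ _ (\bigcup_n ([set w | g (n.+1%:R^-1) w = g 0 w] `|`
     [set w | g (t + n.+1%:R^-1) w = g t w]))).
    move=> w; rewrite /gamma_bridge /= => -[[h1 h2]|[h1 h2]].
      have tt : t < tau w by rewrite ltNge; apply/negP.
      rewrite (min_l (ltW tt)) in h1.
      have [k hk] := ltr_add_invr tt.
      exists k => //; right => /=.
      have gt0 : g (tau w) w != 0 by apply/eqP => h0; move: h1; rewrite h0 invr0 mulr0 => /eqP; rewrite eq_sym oner_eq0.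
      have eq : g t w = g (tau w) w by rewrite -(divfK gt0 (g t w)) h1 mul1r.
      apply: le_anti; apply/andP; split; last first.
        by apply: gmon; [exact: ltW | rewrite lerDl invr_ge0].
      rewrite eq; apply: gmon; last exact: ltW.
      by apply: ltW; apply: (lt_le_trans t0); rewrite lerDl invr_ge0.
    rewrite (min_r h1) in h2.
    have g0 : g (tau w) w = 0.
      case: (eqVneq (g (tau w) w) 0) => // gt0; exfalso; apply: h2; exact: divff gt0.
    have [k hk] := ltr_add_invr (tau0 w); rewrite add0r in hk.
    exists k => //; left => /=.
    apply: le_anti; apply/andP; split; last by apply: gmon; rewrite ?invr_ge0.
    rewrite g00 -g0; apply: gmon; rewrite ?invr_ge0 //; exact: ltW.
  apply: negligible_bigcup => k; apply: negligibleU.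
  - apply: (@neg_eq _ _ _ P g 0 (k.+1%:R^-1) hg) => //.
  - apply: (@neg_eq _ _ _ P g t (t + k.+1%:R^-1) hg); first exact: ltW.
    by rewrite ltrDl invr_gt0.
set Z := gamma_bridge g tau.
have hF : forall t u, 0 <= t -> t <= u ->
    completed_nat_filtration P Z u [set w | tau w <= t].
  move=> t u t0 tu; rewrite /completed_nat_filtration.
  set G := [set A | _ \/ _].
  have [->|tpos] := eqVneq t 0.
    have -> : [set w | tau w <= 0] = set0.
      by apply/seteqP; split => w //=; rewrite leNgt tau0.
    exact: sigma_algebra0.
  have tgt0 : 0 < t by rewrite lt_neqAle eq_sym tpos t0.
  set A := [set w | tau w <= t].
  set B := Z t @^-1` [set 1].
  have -> : A = (B `\` (B `\` A)) `|` (A `\` B).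
    apply/seteqP; split => w /=.
      move=> Aw; case: (pselect (B w)) => Bw; [left|by right].
      by split => // -[].
    move=> [[Bw nBA]|[]] //.
    by apply: contrapT => nA; apply: nBA.
  have GB : G B by left; exists t, [set 1]; split => //; exact: measurable_set1.
  have GN : forall N, N `<=` B `+` A -> G N.
    by move=> N NS; right; apply: negligibleS NS (hneg t tgt0).
  have mB : <<s G >> B by exact: sub_sigma_algebra.
  have mN1 : <<s G >> (B `\` A) by apply: sub_sigma_algebra; apply: GN => w ?; left.
  have mN2 : <<s G >> (A `\` B) by apply: sub_sigma_algebra; apply: GN => w ?; right.
  exact: (@measurableU _ (g_sigma_algebraType G) _ _
      (@measurableD _ (g_sigma_algebraType G) _ _ mB mN1) mN2).
split; first exact: hneg.
split.
  by move=> t t0; exact: hF.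
by move=> t t0 s ts; apply: hF => //; exact: ltW.
Qed.
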